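(* Let $S_1,\ldots,S_m$ be formulas ($m\ge1$). The doxastic state $\emptyset[S_1,S_2,\ldots,S_m]$ coincides with $\emptyset[S_2,\ldots,S_m]$ if and only if, for every Q-combination $Q$ of $S_2,\ldots,S_m$, either $Q\models S_1$ or $Q\models\neg S_1$.
   Context: Propositional models are truth assignments over a finite set of variables; a formula used where a set of models is expected stands for its set of models. A doxastic state is a sequence $[C(0),\ldots,C(k)]$ of nonempty, pairwise disjoint sets of models covering all models; two doxastic states coincide when they are equal (equivalently, induce the same preorder $I\le J$ iff the class index of $I$ is at most that of $J$). The flat doxastic state $\emptyset$ is $[\text{all models}]$. Lexicographic revision: $C\,\mathrm{lex}(A) = [C(0)\cap A,\ldots,C(k)\cap A, C(0)\setminus A,\ldots,C(k)\setminus A]$, empty sets discarded. $\emptyset[S_1,\ldots,S_m]$ denotes $\emptyset$ revised lexicographically by $S_1$, then $S_2$, ..., then $S_m$. A Q-combination of formulas $T_1,\ldots,T_n$ is a formula $(B_1\equiv T_1)\wedge\cdots\wedge(B_n\equiv T_n)$ with each $B_i\in\{\mathsf{true},\mathsf{false}\}$ (for $n=0$ it is $\mathsf{true}$). *)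

(* Defs.v *)
From mathcomp Require Import all_boot.
Set Implicit Arguments. Unset Strict Implicit. Unset Printing Implicit Defensive.

(* Propositional models over n variables: truth assignments 'I_n -> bool.
   A formula is identified with its set of models. *)
Definition model (n : nat) := {ffun 'I_n -> bool}.
Definition formula (n : nat) := {set model n}.

(* A doxastic state: the sequence of classes [C(0); ...; C(k)]. *)
Definition doxstate (n : nat) := seq (formula n).

Definition wf_doxstate n (C : doxstate n) : Prop :=
  (forall X, X \in C -> X != set0) /\
  (forall i j, i < size C -> j < size C -> i != j ->
     [disjoint nth set0 C i & nth set0 C j]) /\
  (forall I : model n, exists2 X, X \in C & I \in X).

Definition flat n : doxstate n := [:: [set: model n]].

Definition lex n (C : doxstate n) (A : formula n) : doxstate n :=
  [seq X <- [seq X :&: A | X <- C] ++ [seq X :\: A | X <- C] | X != set0].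

Definition revs n (Ss : seq (formula n)) : doxstate n := foldl (@lex n) (flat n) Ss.

Definition beqv n (B : bool) (T : formula n) : formula n := if B then T else ~: T.

(* Q-combination (B_1 == T_1) /\ ... /\ (B_k == T_k), for bs = [B_1;...;B_k]
   with size bs = size Ts (empty conjunction = true). *)
Definition qcomb n (bs : seq bool) (Ts : seq (formula n)) : formula n :=
  \bigcap_(p <- zip bs Ts) beqv p.1 p.2.

Definition entails n (Q S : formula n) : bool := Q \subset S.

(* Main.v *)
Require Import Defs.
From mathcomp Require Import all_boot zify.
Set Implicit Arguments. Unset Strict Implicit.

Section S.
Variable n : nat.
Implicit Types (C P : seq (formula n)) (A Q : formula n).

Definition nz (X : formula n) := X != set0.
Definition lex' C A : seq (formula n) :=
  [seq X :&: A | X <- C] ++ [seq X :\: A | X <- C].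
Definition PP (Ts : seq (formula n)) := foldl lex' [:: setT] Ts.

Lemma filter_map0 C (g : formula n -> formula n) : g set0 = set0 ->
  [seq X <- [seq g Y | Y <- [seq Y <- C | Y != set0]] | X != set0]
  = [seq X <- [seq g Y | Y <- C] | X != set0].
Proof.
move=> g0; elim: C => //= X C IH.
case: eqP => [->|_] /=; first by rewrite g0 eqxx.
by rewrite IH.
Qed.

Lemma lex_filter C Ts :
  foldl (@lex n) [seq X <- C | X != set0] Ts =
  [seq X <- foldl lex' C Ts | X != set0].
Proof.
elim: Ts C => //= A Ts IH C; rewrite -IH; congr foldl.
rewrite /lex /lex' !filter_cat !filter_map0 //.
  by rewrite set0D.
by rewrite set0I.
Qed.

Lemma foldl_lex' C Ts :
  foldl lex' C Ts = flatten [seq [seq X :&: Q | X <- C] | Q <- PP Ts].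
Proof.
elim/last_ind: Ts => [|Ts A IH].
  rewrite /PP /= cats0.
  by rewrite -[LHS]map_id; apply: eq_map => X; rewrite setIT.
rewrite /PP !foldl_rcons -/(PP Ts) IH /lex' !map_cat flatten_cat !map_flatten.
rewrite -!map_comp.
congr (_ ++ _); congr flatten; apply: eq_map => Q /=; rewrite -map_comp;
  apply: eq_map => X /=.
  by rewrite setIA.
by rewrite !setDE setIA.
Qed.

Lemma PP_qcomb_a Ts Q : Q \in PP Ts ->
  exists bs, size bs = size Ts /\ Q = qcomb bs Ts.
Proof.
elim/last_ind: Ts Q => [|Ts A IH] Q.
  rewrite /PP /= inE => /eqP ->; exists [::]; split => //.
  by rewrite /qcomb big_nil.
rewrite /PP foldl_rcons -/(PP Ts) /lex' mem_cat => /orP [] /mapP [Q' HQ' ->];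
  have [bs [Hs ->]] := IH _ HQ'.
  exists (rcons bs true); rewrite !size_rcons Hs; split => //.
  by rewrite /qcomb zip_rcons // big_rcons.
exists (rcons bs false); rewrite !size_rcons Hs; split => //.
by rewrite /qcomb zip_rcons // big_rcons /= setDE.
Qed.

Lemma PP_qcomb_b Ts bs : size bs = size Ts -> qcomb bs Ts \in PP Ts.
Proof.
elim/last_ind: Ts bs => [|Ts A IH] bs.
  by case: bs => // _; rewrite /qcomb big_nil /PP /= inE.
case/lastP: bs => [|bs b]; first by rewrite size_rcons.
rewrite !size_rcons => [[Hs]].
rewrite /qcomb zip_rcons // big_rcons /= -/(qcomb bs Ts).
rewrite /PP foldl_rcons -/(PP Ts) /lex' mem_cat.
case: b => /=.
  by rewrite (map_f (fun X => X :&: A)) ?IH.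
by rewrite -setDE (map_f (fun X => X :\: A)) ?orbT ?IH.
Qed.

Lemma key S P :
  [seq X <- flatten [seq [:: (setT :&: S) :&: Q; (setT :\: S) :&: Q] | Q <- P] | X != set0]
  = [seq X <- P | X != set0] <->
  (forall Q, Q \in P -> Q \subset S \/ Q \subset ~: S).
Proof.
have E1 Q : (setT :&: S) :&: Q == set0 = (Q \subset ~: S).
  by rewrite setTI -setD_eq0 setDE setCK setIC.
have E2 Q : (setT :\: S) :&: Q == set0 = (Q \subset S).
  by rewrite setTD -setD_eq0 setDE setIC.
have Q0 Q : Q \subset S -> Q \subset ~: S -> Q = set0.
  move=> h1 h2; apply/eqP; rewrite -subset0.
  by rewrite -(setICr S) subsetI h1 h2.
split.
- move=> Heq.
  have Hc : count (fun X => X != set0) P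
      + has (fun Q => ~~ (Q \subset S) && ~~ (Q \subset ~: S)) P <=
    count (fun X => X != set0)
      (flatten [seq [:: (setT :&: S) :&: Q; (setT :\: S) :&: Q] | Q <- P]).
    elim: P {Heq} => // Q P IH; rewrite map_cons /=.
    rewrite E1 E2.
    case a : (Q \subset ~: S); case b : (Q \subset S) => /=;
      [rewrite (Q0 Q b a) eqxx /= | | | ];
      case: (Q != set0); case: has IH => /=; lia.
  move: Hc; rewrite -!size_filter Heq.
  case h : has => /=; first by rewrite addn1 ltnn.
  move=> _ Q HQ; move/hasPn: h => /(_ Q HQ).
  by case: (Q \subset S); case: (Q \subset ~: S) => //; [left|left|right].
- elim: P => // Q P IH H.
  rewrite map_cons (_ : forall (T : Type) (a : seq T) s, flatten (a :: s) = a ++ flatten s) // filter_cat IH; last by move=> Q' HQ'; apply: H; rewrite inE HQ' orbT.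
  case: (H Q (mem_head _ _)) => h.
  + have := h; rewrite -E2 => /eqP ->.
    by rewrite setTI (setIidPr h) /= eqxx /=; case: ifP.
  + have := h; rewrite -E1 => /eqP ->.
    by rewrite setTD (setIidPr h) /= eqxx /=; case: ifP.
Qed.

End S.

Theorem mainTheorem6 (n : nat) (S1 : formula n) (Ss : seq (formula n)) :
  revs (S1 :: Ss) = revs Ss <->
  (forall bs : seq bool, size bs = size Ss ->
     entails (qcomb bs Ss) S1 \/ entails (qcomb bs Ss) (~: S1)).
Proof.
have nzT : [set: model n] != set0.
  by apply/set0Pn; exists [ffun _ => false].
have Ef : flat n = [seq X <- flat n | X != set0] by rewrite /= nzT.
rewrite /revs /= {1}/lex -/(lex' _ _) lex_filter [in RHS]Ef lex_filter.
rewrite !foldl_lex' /=.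
have -> : [seq [:: [set: model n] :&: Q] | Q <- PP Ss] = [seq [:: Q] | Q <- PP Ss].
  by apply: eq_map => Q; rewrite setTI.
rewrite flatten_seq1 key; split.
- move=> H bs Hs; exact: H (PP_qcomb_b Hs).
- move=> H Q HQ; have [bs [Hs ->]] := PP_qcomb_a HQ; exact: H.
Qed.
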